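(* Define $C(2)=1$ and $C(N)=\frac N2\left(2C(N-1)+1\right)$ for $N\ge 3$. Let $N\ge 3$ and let $\Sigma=(\sigma_1,\dots,\sigma_n)$ be a symbolic collision sequence on the vertex set $\{1,\dots,N\}$ which is $C(N)$-rich. Then there exist a label $k\in\{1,\dots,N\}$ and two indices $1\le p<q\le n$ such that: (i) $k\in\sigma_p\cap\sigma_q$; (ii) $k\notin\bigcup_{j=p+1}^{q-1}\sigma_j$; (iii) if $\sigma_p=\sigma_q$, then there exists $j$ with $p<j<q$ and $\sigma_p\cap\sigma_j\neq\emptyset$; (iv) the sequence $\Sigma'$ obtained from $\Sigma$ by deleting all $\sigma_j$ containing $k$ is $\left(2C(N-1)+1\right)$-rich on the vertex set $\{1,\dots,N\}\setminus\{k\}$.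
   Context: A symbolic collision sequence on a finite vertex set $V$ is a finite sequence $\Sigma=(\sigma_1,\dots,\sigma_n)$ of unordered pairs $\sigma_j=\{a,b\}$ of distinct elements of $V$ (listed in time order). For a positive number $C$, $\Sigma$ is called $C$-rich on $V$ if there are at least $C$ pairwise disjoint blocks of consecutive indices $[a_1,b_1],[a_2,b_2],\dots$ with $b_1<a_2$, $b_2<a_3$, etc., such that for each block the graph with vertex set $V$ and edge set $\{\sigma_j: a_i\le j\le b_i\}$ is connected. *)

(* Defs.v *)
From HB Require Import structures.
From mathcomp Require Import all_boot all_order all_algebra.
Set Implicit Arguments. Unset Strict Implicit. Unset Printing Implicit Defensive.
Import Order.TTheory GRing.Theory Num.Theory.

(* The constant C(N): C(2) = 1, C(N) = N/2 (2 C(N-1) + 1) for N >= 3.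
   Values at N = 0, 1 are irrelevant (set to 1). *)
Fixpoint Cconst (n : nat) : rat :=
  match n with
  | 0 | 1 | 2 => 1%R
  | m.+1 => ((m.+1)%:R / 2 * (2 * Cconst m + 1))%R
  end.

Definition is_collision (T : finType) (e : {set T}) : bool := #|e| == 2.

Definition graph_connected (T : finType) (V : {set T}) (E : seq {set T}) : Prop :=
  forall x y, x \in V -> y \in V ->
    connect (fun u v : T => has (fun e : {set T} => (u \in e) && (v \in e) && (u != v)) E) x y.

(* The block of consecutive indices [a, b] (0-based) of the sequence s. *)
Definition block (T : finType) (s : seq {set T}) (a b : nat) : seq {set T} :=
  [seq nth set0 s j | j <- iota a (b - a).+1].

Definition rich (T : finType) (C : rat) (V : {set T}) (s : seq {set T}) : Prop :=
  exists (m : nat) (a b : nat -> nat),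
    (C <= m%:R)%R /\
    (forall i, i < m -> a i <= b i /\ b i < size s) /\
    (forall i, i.+1 < m -> b i < a i.+1) /\
    (forall i, i < m -> graph_connected V (block s (a i) (b i))).

(* Main.v *)
From Stdlib Require Import Classical_Prop.
Require Import Defs.
From HB Require Import structures.
From mathcomp Require Import all_boot all_order all_algebra.
From mathcomp Require Import zify ring lra.
Import Order.TTheory GRing.Theory Num.Theory.

Module Helpers.
Set Implicit Arguments. Unset Strict Implicit.
Section G.
Variable T : finType.

Definition erel (E : seq {set T}) : rel T :=
  fun u v => has (fun e : {set T} => (u \in e) && (v \in e) && (u != v)) E.

Lemma exitP (r : rel T) (A : pred T) x y : connect r x y -> A x -> ~~ A y ->
  exists u v, [/\ A u, ~~ A v & r u v].
Proof.
move=> /connectP [p pp ->]; elim: p x pp => [|z p IH] x /=; first by move=> _ ->.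
case/andP=> rxz pz Ax; case Az: (A z); first exact: IH.
by move=> _; exists x, z; rewrite Az.
Qed.

Lemma coll3 (f : {set T}) u v w : is_collision f -> u \in f -> v \in f -> u != v ->
  w \in f -> (w == u) || (w == v).
Proof.
move=> cf uf vf uv wf.
have : [set u; v] == f.
  rewrite eqEcard (eqP cf) cards2 uv andbT; apply/subsetP => z.
  by rewrite !inE => /orP [/eqP->|/eqP->].
by move/eqP=> E; move: wf; rewrite -E !inE.
Qed.

Lemma erel_sym (E : seq {set T}) : symmetric (erel E).
Proof. move=> u v; apply: eq_has => f /=; by rewrite [in X in X && _]andbC eq_sym. Qed.

Lemma erel_filter (E : seq {set T}) (w u v : T) : all (@is_collision _) E -> erel E u v -> u != w -> v != w ->
  erel [seq e <- E | w \notin (e : {set T})] u v.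
Proof.
move=> cE /hasP [f fE /andP[/andP[uf vf] uv]] uw vw; apply/hasP; exists f; last by rewrite uf vf uv.
rewrite mem_filter fE andbT; apply/negP => wf.
have := coll3 (allP cE f fE) uf vf uv wf.
by rewrite eq_sym (negbTE uw) eq_sym (negbTE vw).
Qed.

Fixpoint reach (e : rel T) (r : T) n : {set T} :=
  if n is n'.+1 then reach e r n' :|: [set v | [exists u in reach e r n', e u v]]
  else [set r].

Lemma reach_path (e : rel T) (r : T) (p : seq T) : path e r p -> last r p \in reach e r (size p).
Proof.
elim/last_ind: p => [|p x IH]; first by rewrite /= inE.
rewrite rcons_path last_rcons size_rcons => /andP [pp ex] /=.
rewrite !inE; apply/orP; right; apply/existsP; exists (last r p).
by rewrite IH.
Qed.

Lemma far (E : seq {set T}) (r : T) : all (@is_collision _) E -> 1 < #|T| -> graph_connected setT E ->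
  exists w, w != r /\ graph_connected (setT :\ w) [seq f <- E | w \notin (f : {set T})].
Proof.
move=> cE cT gc.
set e := erel E.
have ex v : exists n, v \in reach e r n.
  have := gc r v (in_setT _) (in_setT _).
  by case/connectP => p pp ->; exists (size p); apply: reach_path.
pose d v := ex_minn (ex v).
have dP v : v \in reach e r (d v) by rewrite /d; case: ex_minnP.
have dmin v n : v \in reach e r n -> d v <= n by rewrite /d; case: ex_minnP => k _ H /H.
pose w := [arg max_(i > r) d i].
have wmax v : d v <= d w by rewrite /w; case: arg_maxnP => // i _ H; apply: H.
have d0 v : d v = 0 -> v = r by move=> H; have := dP v; rewrite H inE => /eqP.
have dr : d r = 0 by apply/eqP; rewrite -leqn0; apply: dmin; rewrite inE.
have wr : w != r.
  case/card_gt1P: cT => x [y [_ _ xy]].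
  have [v vr] : exists v, v != r.
    case: (eqVneq x r) => [xr|]; last by exists x.
    by exists y; rewrite -xr eq_sym.
  apply/eqP => wr; have := wmax v; rewrite wr dr leqn0 => /eqP /d0 vr'.
  by rewrite vr' eqxx in vr.
exists w; split => //.
set e' := erel [seq f <- E | w \notin (f : {set T})].
have main n v : d v = n -> v != w -> connect e' r v.
  elim/ltn_ind: n v => n IH v dv vw.
  case: n IH dv => [|n] IH dv; first by rewrite (d0 v dv) connect0.
  have := dP v; rewrite dv /= inE => /orP [H|].
    by have := dmin _ _ H; rewrite dv ltnn.
  rewrite inE => /existsP [u /andP [ur euv]].
  have du : d u <= n := dmin _ _ ur.
  have uw : u != w.
    apply/eqP => uw; have := wmax v; rewrite dv -uw => H.
    by have := leq_trans H du; rewrite ltnn.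
  apply: (connect_trans (IH (d u) du u erefl uw)).
  apply: connect1; apply: erel_filter => //.
have rw : r != w by rewrite eq_sym.
move=> x y; rewrite !inE => /andP [xw _] /andP [yw _].
apply: (connect_trans (y := r)); last exact: main erefl yw.
by rewrite (sym_connect_sym (@erel_sym _)); apply: main erefl xw.
Qed.

End G.

Section R.
Variable T : finType.

Lemma block_take (s : seq {set T}) a b : a <= b -> b < size s ->
  block s a b = take (b - a).+1 (drop a s).
Proof. move=> ab bs; rewrite /block map_nth_iota //; lia. Qed.

Lemma count_take_le (p : pred {set T}) (s : seq {set T}) n : count p (take n s) <= count p s.
Proof. by rewrite -{2}(cat_take_drop n s) count_cat leq_addr. Qed.

Lemma count_take_mono (p : pred {set T}) (s : seq {set T}) n n' : n <= n' ->
  count p (take n s) <= count p (take n' s).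
Proof. by move=> nn; rewrite -(take_takel s nn) count_take_le. Qed.

Lemma rich_filter (M : rat) (V : {set T}) (s : seq {set T}) (p : pred {set T}) m
  (a b : nat -> nat) (G : pred nat) :
  (forall i, i < m -> a i <= b i /\ b i < size s) ->
  (forall i, i.+1 < m -> b i < a i.+1) ->
  (forall i, i < m -> G i -> graph_connected V (filter p (block s (a i) (b i))) /\
                              has p (block s (a i) (b i))) ->
  (M <= (count G (iota 0 m))%:R)%R -> rich M V (filter p s).
Proof.
move=> Hab Hord Hg HM.
have chain i j : i < j -> j < m -> b i < a j.
  elim: j => // j IH ij jm.
  have := Hord j jm; have [h1 h2] := Hab j (ltnW jm).
  case: (ltnP i j) => ij'; first by have := IH ij' (ltnW jm); lia.
  by have -> : i = j by lia.
pose A i := count p (take (a i) s).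
pose Bp i := count p (take (b i).+1 s).
have key i : i < m -> G i ->
  filter p (block s (a i) (b i)) = take (Bp i - A i) (drop (A i) (filter p s)) /\ A i < Bp i.
  move=> im Gi; have [abi bsi] := Hab i im.
  have [_ hp] := Hg i im Gi.
  have E1 : take (b i).+1 s = take (a i) s ++ block s (a i) (b i).
    by rewrite block_take // -takeD; congr take; lia.
  have E2 : Bp i = A i + count p (block s (a i) (b i)) by rewrite /Bp E1 count_cat.
  rewrite has_count in hp.
  split; last by rewrite E2; lia.
  rewrite E2 addKn.
  have -> : filter p s = filter p (take (a i) s) ++ filter p (block s (a i) (b i))
      ++ filter p (drop (b i).+1 s).
    by rewrite -!filter_cat catA -E1 cat_take_drop.
  rewrite drop_size_cat; last by rewrite size_filter.
  by rewrite take_size_cat // size_filter.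
pose L := filter G (iota 0 m).
have Lm j : j < size L -> nth 0 L j < m /\ G (nth 0 L j).
  move=> jL; have := mem_nth 0 jL; rewrite mem_filter mem_iota add0n.
  by case/andP => -> /andP [_ ->].
have Lsort : sorted ltn L by apply: sorted_filter; [exact: ltn_trans|exact: iota_ltn_sorted].
exists (size L), (fun j => A (nth 0 L j)), (fun j => (Bp (nth 0 L j)).-1).
split; first by rewrite /L size_filter.
split.
  move=> j jL; have [im Gi] := Lm j jL; have [_ AB] := key _ im Gi.
  have : Bp (nth 0 L j) <= count p s by apply: count_take_le.
  rewrite size_filter; lia.
split.
  move=> j jL; have [im Gi] := Lm j (ltnW jL); have [_ AB] := key _ im Gi.
  have [im' _] := Lm j.+1 jL.
  have lt := (sortedP 0 Lsort) j jL.
  have := chain _ _ lt im'.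
  move/count_take_mono => /(_ p s); rewrite -/(A _) -/(Bp _); lia.
move=> j jL; have [im Gi] := Lm j jL; have [E AB] := key _ im Gi.
have : Bp (nth 0 L j) <= count p s by apply: count_take_le.
move=> Bs.
rewrite block_take; last by rewrite size_filter; lia.
  have -> : ((Bp (nth 0 L j)).-1 - A (nth 0 L j)).+1 = Bp (nth 0 L j) - A (nth 0 L j) by lia.
  by rewrite -E; case: (Hg _ im Gi).
lia.
Qed.

End R.

Section O.
Variable T : finType.

Lemma mem_block (s : seq {set T}) l r f : l <= r -> f \in block s l r ->
  exists j, [/\ l <= j, j <= r & f = nth set0 s j].
Proof.
move=> lr; case/mapP => j; rewrite mem_iota => /andP [lj jr] ->; exists j; split => //.
lia.
Qed.

Lemma occ (s : seq {set T}) (k : T) x0 x2 l r :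
  2 < #|T| -> all (@is_collision _) s -> x0 < l -> r < x2 -> x2 < size s ->
  k \in nth set0 s x0 -> k \in nth set0 s x2 ->
  graph_connected setT (block s l r) -> l <= r ->
  exists p q, [/\ p < q < size s,
        (k \in nth set0 s p) && (k \in nth set0 s q),
        (forall j, p < j -> j < q -> k \notin nth set0 s j)
      & (nth set0 s p = nth set0 s q ->
           exists j, [/\ p < j, j < q & nth set0 s p :&: nth set0 s j != set0])].
Proof.
move=> cT cs x0l rx2 x2s kx0 kx2 gc lr.
set sg := nth set0 s.
case: (classic (exists p q, [/\ p < q < size s, (k \in sg p) && (k \in sg q),
        (forall j, p < j -> j < q -> k \notin sg j)
      & (sg p = sg q -> exists j, [/\ p < j, j < q & sg p :&: sg j != set0])])) => // Hn.
exfalso.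
have H p q : p < q -> q < size s -> k \in sg p -> k \in sg q ->
    (forall j, p < j -> j < q -> k \notin sg j) ->
    sg p = sg q /\ (forall j, p < j -> j < q -> sg p :&: sg j = set0).
  move=> pq qs kp kq btw; case: (eqVneq (sg p) (sg q)) => E; last first.
    exfalso; apply: Hn; exists p, q; split; rewrite ?pq ?qs ?kp ?kq //.
    by move=> /eqP; rewrite (negbTE E).
  split => // j pj jq; apply/eqP; apply/negPn/negP => nz; apply: Hn; exists p, q.
  split; rewrite ?pq ?qs ?kp ?kq //; by exists j.
set e0 := sg x0.
have claim j : x0 <= j -> j <= x2 ->
    (k \in sg j -> sg j = e0) /\ (k \notin sg j -> sg j :&: e0 = set0).
  elim/ltn_ind: j => j IH x0j jx2.
  case: (eqVneq j x0) => [->|jx0]; first by split => //; rewrite kx0.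
  have x0j' : x0 < j by lia.
  pose P' := fun j' => (x0 <= j') && (j' < j) && (k \in sg j').
  have exP : exists j', P' j' by exists x0; rewrite /P' leqnn x0j' kx0.
  have ubP : forall j', P' j' -> j' <= j by move=> j' /andP [/andP [_ h] _]; lia.
  have [p [Pp pmax]] : exists p, P' p /\ forall j', P' j' -> j' <= p.
    by case: (ex_maxnP exP ubP) => p Pp pm; exists p.
  case/andP: Pp => /andP [x0p pj] kp.
  have ep : sg p = e0 by apply: (IH p pj x0p _).1 => //; lia.
  split => kj.
    have btw : forall j', p < j' -> j' < j -> k \notin sg j'.
      move=> j' pj' j'j; apply/negP => kj'.
      have := pmax j'; rewrite /P' kj' andbT j'j andbT => /(_ ltac:(lia)); lia.
    have [E _] := H p j pj ltac:(lia) kp kj btw.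
    by rewrite -E.
  pose Q := fun j' => (j < j') && (j' <= x2) && (k \in sg j').
  have exQ : exists j', Q j'.
    exists x2; rewrite /Q leqnn kx2 !andbT.
    have : j != x2 by apply/eqP => E; rewrite E kx2 in kj.
    lia.
  case: (ex_minnP exQ) => q /andP [/andP [jq qx2] kq] qmin.
  have btw : forall j', p < j' -> j' < q -> k \notin sg j'.
    move=> j' pj' j'q; apply/negP => kj'.
    case: (ltngtP j' j) => [j'j|jj'|E']; last by move: kj; rewrite -E' kj'.
      have := pmax j'; rewrite /P' kj' andbT j'j andbT => /(_ ltac:(lia)); lia.
    have := qmin j'; rewrite /Q kj' jj' andbT => /(_ ltac:(lia)); lia.
  have [_ D] := H p q ltac:(lia) ltac:(lia) kp kq btw.
  by rewrite setIC -ep; apply: D; lia.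
have c0 : is_collision e0 := allP cs _ (mem_nth set0 (ltn_trans (ltn_trans x0l (leq_ltn_trans lr rx2)) x2s)).
have [w wn] : exists w, w \notin e0.
  have : 0 < #|~: e0| by have := cardsCs e0; rewrite (eqP c0); lia.
  by case/card_gt0P => w; rewrite inE => ?; exists w.
have kw := gc k w (in_setT _) (in_setT _).
have [u [v [ue ve euv]]] := exitP (A := fun z => z \in e0) kw kx0 wn.
case/hasP: euv => f fb /andP [/andP [uf vf] uv].
have [j [lj jr fj]] := mem_block lr fb.
rewrite fj in uf vf.
have [c1 c2] := claim j ltac:(lia) ltac:(lia).
case: (boolP (k \in sg j)) => kj.
  by move: vf; rewrite [nth _ _ _](c1 kj) => vf; rewrite vf in ve.
by have := c2 kj; move/setP/(_ u); rewrite !inE uf ue.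
Qed.
End O.

End Helpers.
Import Helpers.

Lemma Cstep n : (3 <= n)%N -> Cconst n = (n%:R/2 * (2 * Cconst n.-1 + 1))%R.
Proof. by case: n => [|[|[|n]]]. Qed.
Lemma C1 n : (1 <= Cconst n)%R.
Proof.
elim: n => [|[|[|n]]] // IH.
have IH' : (1 <= Cconst n.+3.-1)%R := IH.
rewrite Cstep //.
have h : ((3:rat) <= (n.+3)%:R)%R by rewrite ler_nat.
set x := ((n.+3)%:R)%R in h *. set y := Cconst _ in IH' *.
have h2 : ((3:rat)/2 <= x / 2)%R by lra.
nra.
Qed.

Lemma count_sum (P : pred nat) l : count P l = \sum_(i <- l) (P i : nat).
Proof. by elim: l => [|x l IH]; rewrite ?big_nil ?big_cons //= IH. Qed.

Lemma sum_lb (f : nat -> nat) c l : (forall i, i \in l -> c <= f i) -> c * size l <= \sum_(i <- l) f i.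
Proof.
elim: l => [|x l IH] H; first by rewrite big_nil muln0.
rewrite big_cons /= mulnS leq_add //; first by apply: H; rewrite inE eqxx.
by apply: IH => i il; apply: H; rewrite inE il orbT.
Qed.

Lemma kin (T : finType) (X : seq {set T}) (k : T) : 1 < #|T| -> graph_connected setT X ->
  exists2 f, f \in X & k \in f.
Proof.
move=> cT gc.
have [y yk] : exists y, y != k.
  case/card_gt1P: cT => x [y [_ _ xy]].
  case: (eqVneq x k) => [xk|]; last by exists x.
  by exists y; rewrite -xk eq_sym.
have := gc k y (in_setT _) (in_setT _).
move/exitP => /(_ (pred1 k)) /=; rewrite eqxx (negbTE yk) => /(_ isT isT) [u [v [/eqP -> _]]].
by case/hasP => f fX /andP [/andP [kf _] _]; exists f.
Qed.

Lemma has_conn (T : finType) (V : {set T}) (X : seq {set T}) (p : pred {set T}) :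
  1 < #|V| -> graph_connected V (filter p X) -> has p X.
Proof.
case/card_gt1P => x [y [xV yV xy]] gc.
have := gc x y xV yV.
move/exitP => /(_ (pred1 x)) /=; rewrite eqxx eq_sym (negbTE xy) => /(_ isT isT) [u [v [_ _]]].
case/hasP => f; rewrite mem_filter => /andP [pf fX] _; apply/hasP; by exists f.
Qed.

Theorem lemma3p1 (N : nat) (s : seq {set 'I_N}) :
  3 <= N ->
  all (@is_collision _) s ->
  rich (Cconst N) [set: 'I_N] s ->
  exists (k : 'I_N) (p q : nat),
    [/\ p < q < size s,
        (k \in nth set0 s p) && (k \in nth set0 s q),
        (forall j, p < j -> j < q -> k \notin nth set0 s j),
        (nth set0 s p = nth set0 s q ->
           exists j, [/\ p < j, j < q & nth set0 s p :&: nth set0 s j != set0])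
      & rich (2 * Cconst N.-1 + 1)%R ([set: 'I_N] :\ k)
             [seq e <- s | (k \notin (e : {set 'I_N}))]].
Proof.
move=> N3 cs [m [a [b [Hm [Hab [Hord Hgc]]]]]].
have cT : 2 < #|'I_N| by rewrite card_ord.
have cT1 : 1 < #|'I_N| by lia.
set M := (2 * Cconst N.-1 + 1)%R.
have M3 : (3 <= M)%R by have := C1 N.-1; rewrite /M; lra.
have CN : Cconst N = (N%:R / 2 * M)%R by rewrite Cstep.
have m3 : 3 <= m.
  have hN : ((3:rat) <= N%:R)%R by rewrite ler_nat.
  have : ((3:rat) <= m%:R)%R.
    apply: le_trans Hm; rewrite CN.
    have h2 : ((3:rat)/2 <= N%:R / 2)%R by lra.
    nra.
  by rewrite ler_nat.
have blk_coll i : i < m -> all (@is_collision _) (block s (a i) (b i)).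
  move=> im; have [abi bs] := Hab i im; apply/allP => f /(mem_block abi) [j [_ jb ->]].
  apply: (allP cs); apply: mem_nth; exact: leq_ltn_trans jb bs.
pose goodn i (k : 'I_N) := [forall x, forall y, (x \in [set: 'I_N] :\ k) ==> (y \in [set: 'I_N] :\ k) ==>
   connect (erel [seq e <- block s (a i) (b i) | k \notin (e : {set 'I_N})]) x y].
have goodP i k : goodn i k -> graph_connected ([set: 'I_N] :\ k) [seq e <- block s (a i) (b i) | k \notin (e : {set 'I_N})].
  move=> /forallP H x y xV yV; have /forallP H' := H x; have := H' y.
  by rewrite xV yV.
have two i : i < m -> exists w1 w2, [/\ w1 != w2, goodn i w1 & goodn i w2].
  move=> im.
  have gfar r : exists w, w != r /\ goodn i w.
    have [w [wr gw]] := far r (blk_coll i im) cT1 (Hgc i im).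
    exists w; split => //; apply/forallP => x; apply/forallP => y.
    by apply/implyP => xV; apply/implyP => yV; apply: gw.
  have [w1 [_ g1]] := gfar (Ordinal (ltn_trans (isT : 0 < 2) N3)).
  have [w2 [w21 g2]] := gfar w1.
  by exists w1, w2; rewrite eq_sym.
pose F i k := (goodn i k : nat).
have S1 : 2 * m <= \sum_(i <- iota 0 m) \sum_(k : 'I_N) F i k.
  rewrite -{1}(size_iota 0 m); apply: (sum_lb (fun i => \sum_(k : 'I_N) F i k)) => i; rewrite mem_iota add0n => /andP [_ im].
  have [w1 [w2 [w12 g1 g2]]] := two i im.
  rewrite (bigD1 w1) //= (bigD1 w2) /=; last by rewrite eq_sym.
  by rewrite /F g1 g2 addnA leq_addr.
rewrite exchange_big /= in S1.
pose c k := \sum_(i <- iota 0 m) F i k.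
pose k0 : 'I_N := Ordinal (ltn_trans (isT : 0 < 2) N3).
pose kmax := [arg max_(k > k0) c k].
have cmax k : c k <= c kmax by rewrite /kmax; case: arg_maxnP => // i _ H; apply: H.
have S2 : 2 * m <= N * c kmax.
  apply: (leq_trans S1); apply: (@leq_trans (\sum_(k : 'I_N) c kmax)).
    by apply: leq_sum => k _; apply: cmax.
  by rewrite sum_nat_const card_ord.
have Mc : (M <= (c kmax)%:R)%R.
  have hN : ((0:rat) < N%:R)%R by rewrite ltr0n; lia.
  have S3 : ((2:rat) * m%:R <= N%:R * (c kmax)%:R)%R.
    have := S2; rewrite -(ler_nat rat) !natrM //.
  rewrite -(ler_pM2l hN); move: Hm; rewrite CN => Hm'.
  have : (N%:R * M = (2:rat) * (N%:R / 2 * M))%R by field.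
  lra.
exists kmax.
have [x0 h0 k0in] : exists2 x, a 0 <= x <= b 0 & kmax \in nth set0 s x.
  have [f fb kf] := @kin _ _ kmax cT1 (Hgc 0 ltac:(lia)).
  have [abi _] := Hab 0 ltac:(lia).
  have [j [lj jr fj]] := mem_block abi fb; exists j; first by rewrite lj jr.
  by rewrite -fj.
have [x2 h2 k2in] : exists2 x, a 2 <= x <= b 2 & kmax \in nth set0 s x.
  have [f fb kf] := @kin _ _ kmax cT1 (Hgc 2 ltac:(lia)).
  have [abi _] := Hab 2 ltac:(lia).
  have [j [lj jr fj]] := mem_block abi fb; exists j; first by rewrite lj jr.
  by rewrite -fj.
have o0 := Hord 0 ltac:(lia). have o1 := Hord 1 ltac:(lia).
have [ab1 _] := Hab 1 ltac:(lia). have [_ bs2] := Hab 2 ltac:(lia).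
have e1 : x0 < a 1 by lia.
have e2 : b 1 < x2 by lia.
have e3 : x2 < size s by lia.
have [p [q [H1 H2 H3 H4]]] := occ (k := kmax) (x0 := x0) (x2 := x2) (l := a 1) (r := b 1) cT cs
  e1 e2 e3 k0in k2in (Hgc 1 ltac:(lia)) ab1.
exists p, q; split => //.
apply: (rich_filter (m := m) (a := a) (b := b) (G := fun i => goodn i kmax)) => //.
- move=> i im Gi; split; first exact: goodP.
  apply: (@has_conn _ ([set: 'I_N] :\ kmax)); last exact: goodP.
  have := cardsD1 kmax [set: 'I_N]; rewrite in_setT cardsT card_ord add1n => E. have N3' := N3; by move: N3'; rewrite {1}E.
- by rewrite count_sum.
Qed.
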